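(* Suppose $X$ is a large scale space that is large scale chain-connected via a uniformly bounded cover $\mathcal U$, and suppose that for every bounded subset $B$ of $X$ the union of all bounded $\mathcal U$-components of $X\setminus B$ is bounded and $X\setminus B$ has only finitely many unbounded $\mathcal U$-components. Suppose there is an increasing sequence $\{B_i\}_{i\ge1}$ of bounded subsets of $X$ such that every bounded subset of $X$ is contained in some $B_i$. Then the coarse ends of $X$ are in one-to-one correspondence with the Freudenthal ends of $X$ with respect to $\{B_i\}$, in the following sense: for every Freudenthal end $\{C_i\}_{i\ge1}$ there is exactly one end $E$ of $X$ with $C_i\in E$ for all $i$, and every end $E$ of $X$ contains all members of some (necessarily unique) Freudenthal end.
   Context: A large scale space is a set $X$ with a family $\mathbb{LSS}$ of covers (uniformly bounded covers) such that $st(\mathcal U,\mathcal V)\in\mathbb{LSS}$ whenever $\mathcal U,\mathcal V\in\mathbb{LSS}$, and any cover each of whose elements lies in some element of a member of $\mathbb{LSS}$ is in $\mathbb{LSS}$; here $st(x,\mathcal U)$ is the union of elements of $\mathcal U$ containing $x$, $st(A,\mathcal U)=\bigcup_{x\in A}st(x,\mathcal U)$, $st(\mathcal U,\mathcal V)=\{st(A,\mathcal V):A\in\mathcal U\}$. Bounded sets are subsets of elements of uniformly bounded covers; the union of two bounded sets is assumed bounded. $A$ is coarsely clopen if $st(A,\mathcal U)\cap st(X\setminus A,\mathcal U)$ is bounded for every uniformly bounded $\mathcal U$. A (coarse) end of $X$ is a family of unbounded coarsely clopen subsets maximal with respect to all finite intersections being unbounded. Given a cover $\mathcal U$, a $\mathcal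 U$-chain is a finite sequence $x_1,\dots,x_n$ such that for each $i<n$ some element of $\mathcal U$ contains $x_i$ and $x_{i+1}$; a set $W$ is $\mathcal U$-connected if any two of its points are joined by a $\mathcal U$-chain in $W$; the $\mathcal U$-components of $A\subseteq X$ are the equivalence classes of points of $A$ under joinability by $\mathcal U$-chains in $A$. $X$ is large scale chain-connected via $\mathcal U$ if $\mathcal U$ is uniformly bounded and every uniformly bounded cover $\mathcal V$ refines a uniformly bounded cover $\mathcal W$ consisting of $\mathcal U$-connected sets. A Freudenthal end of $X$ with respect to $\{B_i\}$ is a decreasing sequence $\{C_i\}_{i\ge1}$ where each $C_i$ is a non-empty $\mathcal U$-component of $X\setminus B_i$. *)

(* Defs.v *)
From mathcomp Require Import all_boot.
From mathcomp Require Export boolp classical_sets functions cardinality.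
Set Implicit Arguments.
Unset Strict Implicit.
Unset Printing Implicit Defensive.
Local Open Scope classical_set_scope.

Section LargeScale.
Variable X : Type.

Definition is_cover (U : set (set X)) : Prop := forall x, exists A, U A /\ A x.

Definition st_pt (x : X) (U : set (set X)) : set X :=
  [set y | exists A, U A /\ A x /\ A y].
Definition st_set (A : set X) (U : set (set X)) : set X :=
  [set y | exists x, A x /\ st_pt x U y].
Definition st_cov (U V : set (set X)) : set (set X) :=
  [set S | exists A, U A /\ S = st_set A V].

Definition refines (U V : set (set X)) : Prop :=
  forall A, U A -> exists B, V B /\ A `<=` B.

(* A large scale structure: a family of (uniformly bounded) covers *)
Record is_lss (L : set (set (set X))) : Prop := {
  lss_cover : forall U, L U -> is_cover U;
  lss_star : forall U V, L U -> L V -> L (st_cov U V);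
  lss_refine : forall U V, L V -> is_cover U -> refines U V -> L U }.

Definition bounded (L : set (set (set X))) (B : set X) : Prop :=
  exists U, L U /\ exists A, U A /\ B `<=` A.

Definition coarsely_clopen (L : set (set (set X))) (A : set X) : Prop :=
  forall U, L U -> bounded L (st_set A U `&` st_set (~` A) U).

Definition good_family (L : set (set (set X))) (E : set (set X)) : Prop :=
  (forall A, E A -> ~ bounded L A /\ coarsely_clopen L A) /\
  (forall (n : nat) (A : nat -> set X), (forall i, (i < n)%N -> E (A i)) ->
     ~ bounded L (\bigcap_(i in `I_n) A i)).

Definition is_end (L : set (set (set X))) (E : set (set X)) : Prop :=
  good_family L E /\ (forall F, good_family L F -> E `<=` F -> F = E).

Inductive uchain (U : set (set X)) (A : set X) (x : X) : X -> Prop :=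
| uchain_refl : A x -> uchain U A x x
| uchain_step : forall y z, uchain U A x y -> A z ->
    (exists V, U V /\ V y /\ V z) -> uchain U A x z.

Definition u_connected (U : set (set X)) (W : set X) : Prop :=
  forall x y, W x -> W y -> uchain U W x y.

Definition is_component (U : set (set X)) (A C : set X) : Prop :=
  exists x, A x /\ C = [set y | uchain U A x y].

Definition ls_chain_connected (L : set (set (set X))) (U : set (set X)) : Prop :=
  L U /\ forall V, L V -> exists W, L W /\ (forall A, W A -> u_connected U A)
                                  /\ refines V W.

(* Freudenthal end w.r.t. B (indices start at 0 instead of 1) *)
Definition freudenthal_end (U : set (set X)) (B : nat -> set X) (C : nat -> set X) : Prop :=
  (forall i, C i.+1 `<=` C i) /\
  (forall i, C i !=set0 /\ is_component U (~` B i) (C i)).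

End LargeScale.

(* Main.v *)
Require Import Defs.
From mathcomp Require Import all_boot.
From mathcomp Require Import boolp classical_sets functions cardinality.
Local Open Scope classical_set_scope.
Set Implicit Arguments.
Unset Strict Implicit.

Lemma uchain_in X (U : set (set X)) A x y : uchain U A x y -> A x /\ A y.
Proof. by elim=> [//|y' z _ [Hx _] Az _]. Qed.

Lemma uchain_trans X (U : set (set X)) A x y z :
  uchain U A x y -> uchain U A y z -> uchain U A x z.
Proof. by move=> Hxy; elim=> [//|y' z' _ IH Az Hv]; apply: uchain_step IH Az Hv. Qed.

Lemma uchain_sym X (U : set (set X)) A x y : uchain U A x y -> uchain U A y x.
Proof.
elim=> [Ax|y' z H IH Az [V [UV [Vy Vz]]]]; first exact: uchain_refl.
apply: uchain_trans IH.
apply: (uchain_step (y:=z)); first exact: uchain_refl.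
  by case: (uchain_in H).
by exists V.
Qed.

Lemma uchain_mono X (U : set (set X)) A A' x y : A `<=` A' ->
  uchain U A x y -> uchain U A' x y.
Proof.
move=> AA'; elim=> [Ax|y' z _ IH Az Hv]; first by apply: uchain_refl; apply: AA'.
by apply: uchain_step IH (AA' _ Az) Hv.
Qed.

Lemma comp_sub X (U : set (set X)) A C : is_component U A C -> C `<=` A.
Proof. by move=> [x [Ax ->]] y /= H; case: (uchain_in H). Qed.

Lemma comp_mem X (U : set (set X)) A C x : is_component U A C -> C x ->
  C = [set y | uchain U A x y].
Proof.
move=> [x0 [Ax0 ->]] /= Hx; apply/seteqP; split=> y /= H.
  exact: uchain_trans (uchain_sym Hx) H.
exact: uchain_trans Hx H.
Qed.

Lemma comp_eq X (U : set (set X)) A C C' x : is_component U A C ->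
  is_component U A C' -> C x -> C' x -> C = C'.
Proof. by move=> HC HC' Cx C'x; rewrite (comp_mem HC Cx) (comp_mem HC' C'x). Qed.

Lemma bounded_sub X (L : set (set (set X))) A B : bounded L A -> B `<=` A -> bounded L B.
Proof. move=> [V [LV [W [VW AW]]]] BA; exists V; split=> //; exists W; split=> //.
exact: subset_trans BA AW. Qed.

Inductive finint X (E : set (set X)) : set X -> Prop :=
| fi_T : finint E setT
| fi_I S A : finint E S -> E A -> finint E (S `&` A).

Lemma finint_idx X (E : set (set X)) S : finint E S ->
  exists n (A : nat -> set X), (forall i, (i < n)%N -> E (A i)) /\
     \bigcap_(i in `I_n) A i `<=` S.
Proof.
elim=> [|S' A _ [n [F [HF Hsub]]] EA]; first by exists 0%N, (fun _ => setT).
exists n.+1, (fun i => if i == n then A else F i); split.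
  move=> i; case: eqP => [//|ne] lt; apply: HF.
  by rewrite ltnS leq_eqVlt in lt; case/orP: lt => // /eqP.
move=> x Hx; split.
  apply: Hsub => i /= lt; have := Hx i; rewrite /= (ltn_eqF lt); apply.
  by rewrite /= ltnS ltnW.
by have := Hx n; rewrite eqxx; apply => /=.
Qed.

Lemma idx_finint X (E : set (set X)) n (A : nat -> set X) :
  (forall i, (i < n)%N -> E (A i)) ->
  exists S, finint E S /\ S `<=` \bigcap_(i in `I_n) A i.
Proof.
elim: n => [|n IH] H.
  by exists setT; split; [exact: fi_T| move=> x _ i /=].
have [S [FS Sub]] : exists S, finint E S /\ S `<=` \bigcap_(i in `I_n) A i.
  by apply: IH => i lt; apply: H; rewrite ltnW.
exists (S `&` A n); split; first by apply: fi_I => //; apply: H.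
move=> x [Sx Ax] i /=; rewrite ltnS leq_eqVlt => /orP [/eqP -> //|lt].
exact: (Sub x Sx i lt).
Qed.

Lemma good_finint X (L : set (set (set X))) E S : good_family L E -> finint E S ->
  ~ bounded L S.
Proof.
move=> [_ G] /finint_idx [n [A [HA Sub]]] Sb; apply: (G n A HA).
exact: bounded_sub Sb Sub.
Qed.

Lemma finint_good X (L : set (set (set X))) E :
  (forall A, E A -> ~ bounded L A /\ coarsely_clopen L A) ->
  (forall S, finint E S -> ~ bounded L S) -> good_family L E.
Proof.
move=> H1 H2; split=> // n A HA Hb.
have [S [FS Sub]] := idx_finint HA.
by apply: (H2 S FS); apply: bounded_sub Hb Sub.
Qed.

Lemma fin_surj T (t0 : T) (A : set T) : finite_set A ->
  exists n (f : nat -> T), A = f @` `I_n.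
Proof.
move=> [n Hn].
have : (A #<= `I_n)%card by move: Hn; rewrite card_eq_le => /andP[].
case/pfcard_geP => [->|].
  by exists 0%N, (fun _ => t0); rewrite II0 image_set0.
by move/surjfunPex => [f ->]; exists n, f.
Qed.
Lemma st_mono X (A A' : set X) V : A `<=` A' -> st_set A V `<=` st_set A' V.
Proof. by move=> AA' y [x [Ax H]]; exists x; split=> //; apply: AA'. Qed.

Lemma st_bounded X (L : set (set (set X))) (HL : is_lss L) V B :
  L V -> bounded L B -> bounded L (st_set B V).
Proof.
move=> LV [M [LM [A0 [MA0 BA0]]]].
exists (st_cov M V); split; first exact: lss_star.
by exists (st_set A0 V); split; [exists A0|apply: st_mono].
Qed.

Lemma comp_cc X (L : set (set (set X))) (HL : is_lss L) U
  (Hcc : ls_chain_connected L U) B (Hb : bounded L B) C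
  (HC : is_component U (~` B) C) : coarsely_clopen L C.
Proof.
move=> V LV; have [W [LW [Wcon Vref]]] := Hcc.2 V LV.
apply: bounded_sub (st_bounded HL LW Hb) _.
move=> y [[c [Cc [V1 [VV1 [V1c V1y]]]]] [d [nCd [V2 [VV2 [V2d V2y]]]]]].
have [W1 [WW1 V1W1]] := Vref V1 VV1.
have [W2 [WW2 V2W2]] := Vref V2 VV2.
apply: contrapT => nst.
have W1B : W1 `<=` ~` B.
  move=> z W1z Bz; apply: nst; exists z; split=> //; exists W1; split=> //.
  by split=> //; apply: V1W1.
have W2B : W2 `<=` ~` B.
  move=> z W2z Bz; apply: nst; exists z; split=> //; exists W2; split=> //.
  by split=> //; apply: V2W2.
have hy := uchain_mono W1B (Wcon W1 WW1 c y (V1W1 c V1c) (V1W1 y V1y)).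
have hd := uchain_mono W2B (Wcon W2 WW2 y d (V2W2 y V2y) (V2W2 d V2d)).
apply: nCd; rewrite (comp_mem HC Cc) /=.
exact: uchain_trans hy hd.
Qed.

Lemma dichot X (U : set (set X)) (A Bk : set X)
  (HU : forall z, st_set A U z -> st_set (~` A) U z -> Bk z) C
  (HC : is_component U (~` Bk) C) :
  C `<=` A \/ (forall y, C y -> ~ A y).
Proof.
have [x [nBx ->]] := HC.
have key : forall y, uchain U (~` Bk) x y -> (A x <-> A y).
  move=> y; elim=> [_ //|y' z _ IH Az [V [UV [Vy Vz]]]].
  rewrite IH; split=> Ha.
  - apply: contrapT => nAz; apply: Az; apply: HU.
      by exists y'; split=> //; exists V.
    by exists z; split=> //; exists V.
  - apply: contrapT => nAy; apply: Az; apply: HU.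
      by exists z; split=> //; exists V.
    by exists y'; split=> //; exists V.
case: (pselect (A x)) => Ax; [left|right] => y /= /key; first by move=> <-.
by move=> <-.
Qed.

Lemma finint_I X (E : set (set X)) S T : finint E S -> finint E T -> finint E (S `&` T).
Proof.
move=> FS; elim=> [|T' A _ IH EA]; first by rewrite setIT.
by rewrite setIA; apply: fi_I.
Qed.
Unset Implicit Arguments.
Theorem theorem3p4 (X : Type) (L : set (set (set X))) (HL : is_lss L)
  (Hunion : forall A B, bounded L A -> bounded L B -> bounded L (A `|` B))
  (U : set (set X)) (Hcc : ls_chain_connected L U)
  (Hcomp : forall B, bounded L B ->
     bounded L (\bigcup_(C in [set C | is_component U (~` B) C /\ bounded L C]) C)
     /\ finite_set [set C | is_component U (~` B) C /\ ~ bounded L C])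
  (B : nat -> set X)
  (HBb : forall i, bounded L (B i))
  (HBinc : forall i, B i `<=` B i.+1)
  (HBcof : forall A, bounded L A -> exists i, A `<=` B i) :
  (forall C, freudenthal_end U B C ->
     exists! E, is_end L E /\ forall i, E (C i)) /\
  (forall E, is_end L E ->
     exists! C, freudenthal_end U B C /\ forall i, E (C i)).
Proof.
have LU := Hcc.1.
have Bmono : forall i k, (i <= k)%N -> B i `<=` B k.
  move=> i k; elim: k => [|k IH]; first by rewrite leqn0 => /eqP ->.
  rewrite leq_eqVlt => /orP [/eqP -> //|lt].
  exact: subset_trans (IH lt) (HBinc k).
have bnd0 : bounded L set0 := bounded_sub (HBb 0) (@sub0set _ _).
have unb_ne : forall A, ~ bounded L A -> exists x, A x.
  move=> A nb; apply: contrapT => nex; apply: nb; apply: bounded_sub bnd0 _.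
  by move=> x Ax; apply: nex; exists x.
have compcc : forall i C, is_component U (~` B i) C -> coarsely_clopen L C.
  by move=> i C; apply: comp_cc => //; apply: HBb.
have dich : forall A, coarsely_clopen L A -> exists j, forall k, (j <= k)%N ->
    forall C, is_component U (~` B k) C -> C `<=` A \/ (forall y, C y -> ~ A y).
  move=> A HA; have [j Hj] := HBcof _ (HA U LU).
  exists j => k jk C HC; apply: dichot HC => z H1 H2.
  by apply: (Bmono _ _ jk); apply: Hj.
have Fmono : forall C, freudenthal_end U B C -> forall i k, (i <= k)%N -> C k `<=` C i.
  move=> C [HF _] i k; elim: k => [|k IH]; first by rewrite leqn0 => /eqP ->.
  rewrite leq_eqVlt => /orP [/eqP -> //|lt].
  exact: subset_trans (HF k) (IH lt).
have fe_unb : forall C, freudenthal_end U B C -> forall i, ~ bounded L (C i).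
  move=> C HF i Hb; have [j Hj] := HBcof _ Hb.
  have [[y Cy] Hc] := HF.2 (maxn i j).
  have := comp_sub Hc Cy; apply.
  apply: (Bmono j); first exact: leq_maxr.
  by apply: Hj; apply: (Fmono C HF i); first exact: leq_maxl.
split.
- move=> C HF.
  pose EC := [set A | coarsely_clopen L A /\ exists j, C j `<=` A].
  have ECmem : forall i, EC (C i).
    by move=> i; split; [apply: (compcc i); exact: (HF.2 i).2|exists i].
  have goodEC : good_family L EC.
    apply: finint_good.
      move=> A [HA [j Hj]]; split=> // Hb; apply: (fe_unb C HF j).
      exact: bounded_sub Hb Hj.
    have fi : forall S, finint EC S -> exists j, C j `<=` S.
      move=> S; elim=> [|S' A _ [j1 H1] [_ [j2 H2]]]; first by exists 0%N.
      exists (maxn j1 j2) => x Cx; split.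
        by apply: H1; apply: (Fmono C HF j1 (maxn j1 j2)) => //; exact: leq_maxl.
      by apply: H2; apply: (Fmono C HF j2 (maxn j1 j2)) => //; exact: leq_maxr.
    move=> S /fi [j Hj] Hb; apply: (fe_unb C HF j); exact: bounded_sub Hb Hj.
  have sub_EC : forall F, good_family L F -> (forall i, F (C i)) -> F `<=` EC.
    move=> F GF FC A FA; have HA := (GF.1 A FA).2.
    have [j Hj] := dich A HA.
    case: (Hj j (leqnn j) (C j) (HF.2 j).2) => [Hs|Hd].
      by split=> //; exists j.
    exfalso.
    have FI : finint F (setT `&` C j `&` A) by apply: fi_I => //; apply: fi_I => //; apply: fi_T.
    apply: (good_finint GF FI); apply: bounded_sub bnd0 _.
    by move=> x [[_ Cx] Ax]; apply: (Hd x Cx Ax).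
  exists EC; split.
    split=> //; split=> // F GF ECF.
    apply/seteqP; split=> //; apply: sub_EC => // i; apply: ECF; exact: ECmem.
  move=> E' [[GE' ME'] HE'].
  apply: ME' => //; exact: sub_EC.
- move=> E [GE ME].
  have notin : forall A, coarsely_clopen L A -> ~ E A ->
      exists S, finint E S /\ bounded L (S `&` A).
    move=> A HA nEA; apply: contrapT => nex.
    have HS : forall S, finint E S -> ~ bounded L (S `&` A).
      by move=> S FS Hb; apply: nex; exists S.
    pose F := E `|` [set A].
    have GF : good_family L F.
      apply: finint_good.
        move=> A' [EA'|->]; first exact: GE.1.
        split=> //; rewrite -(setTI A); apply: HS; exact: fi_T.
      have fi : forall S, finint F S -> exists S', finint E S' /\ S' `&` A `<=` S.
        move=> S; elim=> [|S1 A1 _ [S' [FS' Sub]] [EA1|->]].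
        - by exists setT; split; [exact: fi_T|].
        - exists (S' `&` A1); split; first exact: fi_I.
          by move=> x [[S'x A1x] Ax]; split=> //; apply: Sub.
        - by exists S'; split=> // x [S'x Ax]; split=> //; apply: Sub.
      move=> S /fi [S' [FS' Sub]] Hb; apply: (HS S' FS').
      exact: bounded_sub Hb Sub.
    apply: nEA.
    have <- : F = E by apply: ME => // x Ex; left.
    by right.
  have up : forall A A', E A -> A `<=` A' -> coarsely_clopen L A' -> E A'.
    move=> A A' EA AA' HA'; apply: contrapT => nE.
    have [S [FS Hb]] := notin A' HA' nE.
    apply: (good_finint GE (fi_I FS EA)); apply: bounded_sub Hb _.
    by move=> x [Sx Ax]; split=> //; apply: AA'.
  have uniq_comp : forall i C C', is_component U (~` B i) C ->
      is_component U (~` B i) C' -> E C -> E C' -> C = C'.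
    move=> i C C' HC HC' EC EC'.
    have FI : finint E (setT `&` C `&` C') by apply: fi_I => //; apply: fi_I => //; apply: fi_T.
    have [x [[_ Cx] C'x]] := unb_ne _ (good_finint GE FI).
    exact: comp_eq HC HC' Cx C'x.
  have ex_comp : forall i, exists C, is_component U (~` B i) C /\ E C.
    move=> i; apply: contrapT => nex.
    have nE : forall C, is_component U (~` B i) C -> ~ E C.
      by move=> C HC EC; apply: nex; exists C.
    have [HD Hfin] := Hcomp (B i) (HBb i).
    have [n [f Hf]] := fin_surj set0 Hfin.
    have fK : forall m, (m < n)%N -> is_component U (~` B i) (f m) /\ ~ bounded L (f m).
      move=> m lt; have : [set C | is_component U (~` B i) C /\ ~ bounded L C] (f m).
        by rewrite Hf; exists m.
      by [].
    have comb : forall m, (m <= n)%N -> exists S, finint E S /\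
        bounded L (S `&` [set x | exists k, (k < m)%N /\ f k x]).
      elim=> [_|m IH lt].
        exists setT; split; first exact: fi_T.
        by apply: bounded_sub bnd0 _ => x [_ [k []]].
      have [S [FS Hb]] := IH (ltnW lt).
      have [Hm _] := fK m lt.
      have [Sm [FSm Hbm]] := notin (f m) (compcc i _ Hm) (nE _ Hm).
      exists (S `&` Sm); split; first exact: finint_I.
      apply: bounded_sub (Hunion _ _ Hb Hbm) _.
      move=> x [[Sx Smx] [k [lk fkx]]].
      rewrite ltnS leq_eqVlt in lk; case/orP: lk => [/eqP Ek|lk].
        by right; split=> //; rewrite -Ek.
      by left; split=> //; exists k.
    have [S [FS Hb]] := comb n (leqnn n).
    apply: (good_finint GE FS).
    apply: bounded_sub (Hunion _ _ (Hunion _ _ (HBb i) HD) Hb) _.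
    move=> x Sx; case: (pselect (B i x)) => Bx; first by left; left.
    pose Cx := [set y | uchain U (~` B i) x y].
    have HCx : is_component U (~` B i) Cx by exists x.
    have Cxx : Cx x by apply: uchain_refl.
    case: (pselect (bounded L Cx)) => bCx.
      by left; right; exists Cx.
    have : [set C | is_component U (~` B i) C /\ ~ bounded L C] Cx by [].
    rewrite Hf => -[k lk fk].
    by right; split=> //; exists k; split=> //; rewrite fk.
  have [C HC] := choice ex_comp.
  exists C; split.
    split; last by move=> i; case: (HC i).
    split; last first.
      move=> i; have [HCi ECi] := HC i; split=> //.
      exact: unb_ne (GE.1 _ ECi).1.
    move=> i.
    have [HCi ECi] := HC i.+1.
    have [x Cx] := unb_ne _ (GE.1 _ ECi).1.
    have nBx : (~` B i) x.
      by move=> Bx; apply: (comp_sub HCi Cx); apply: HBinc.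
    pose C' := [set y | uchain U (~` B i) x y].
    have HC' : is_component U (~` B i) C' by exists x.
    have sub : C i.+1 `<=` C'.
      move=> y Cy; have := Cy; rewrite (comp_mem HCi Cx) /= => H.
      apply: uchain_mono H => z nBz Bz; apply: nBz; exact: HBinc.
    have EC' : E C' := up _ _ ECi sub (compcc i _ HC').
    by rewrite -(uniq_comp i C' (C i) HC' (HC i).1 EC' (HC i).2).
  move=> C' [[_ HF'] EC'].
  apply: funext => i.
  exact: uniq_comp i (C i) (C' i) (HC i).1 (HF' i).2 (HC i).2 (EC' i).
Qed.
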